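(* Let $A_1,\dots,A_n$ be groups, $G\subset A_1\times\dots\times A_n$ a subgroup with projections $p_i:G\to A_i$, and let $f:G\to\mathbb F$ be a homomorphism to a free group $\mathbb F$ whose image is non-abelian. Then there is an index $i$ such that $f$ factors through $p_i$, i.e. $\ker p_i\subset\ker f$. *)

(* Defs.v *)
From mathcomp Require Import all_boot.
Set Implicit Arguments. Unset Strict Implicit. Unset Printing Implicit Defensive.

Record AbsGroup := {
  carrier :> Type;
  gmul : carrier -> carrier -> carrier;
  gone : carrier;
  ginv : carrier -> carrier;
  gmulA : forall x y z, gmul x (gmul y z) = gmul (gmul x y) z;
  gmul1l : forall x, gmul gone x = x;
  gmul1r : forall x, gmul x gone = x;
  gmulVl : forall x, gmul (ginv x) x = gone;
  gmulVr : forall x, gmul x (ginv x) = gone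
}.

Definition is_hom (G H : AbsGroup) (f : G -> H) : Prop :=
  forall x y, f (gmul x y) = gmul (f x) (f y).

Definition is_free_group (F : AbsGroup) : Prop :=
  exists (X : Type) (iota : X -> F),
    forall (H : AbsGroup) (phi : X -> H),
      (exists h : F -> H, is_hom h /\ forall x, h (iota x) = phi x) /\
      (forall h1 h2 : F -> H, is_hom h1 -> is_hom h2 ->
         (forall x, h1 (iota x) = phi x) -> (forall x, h2 (iota x) = phi x) ->
         forall y, h1 y = h2 y).

Definition prodT (n : nat) (A : 'I_n -> AbsGroup) : Type := forall i : 'I_n, A i.
Definition pmul n (A : 'I_n -> AbsGroup) (x y : prodT A) : prodT A :=
  fun i => gmul (x i) (y i).
Definition pone n (A : 'I_n -> AbsGroup) : prodT A := fun i => gone (A i).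
Definition pinv n (A : 'I_n -> AbsGroup) (x : prodT A) : prodT A :=
  fun i => ginv (x i).

Definition is_subgroup n (A : 'I_n -> AbsGroup) (G : prodT A -> Prop) : Prop :=
  G (pone A) /\
  (forall x y, G x -> G y -> G (pmul x y)) /\
  (forall x, G x -> G (pinv x)).

(* f : G -> F is a homomorphism on the subgroup G (values of f outside G
   are irrelevant). *)
Definition is_hom_on n (A : 'I_n -> AbsGroup) (G : prodT A -> Prop) (F : AbsGroup)
  (f : prodT A -> F) : Prop :=
  forall x y, G x -> G y -> f (pmul x y) = gmul (f x) (f y).

Definition nonabelian_image n (A : 'I_n -> AbsGroup) (G : prodT A -> Prop)
  (F : AbsGroup) (f : prodT A -> F) : Prop :=
  exists x y, G x /\ G y /\ gmul (f x) (f y) <> gmul (f y) (f x).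

Definition ker_proj_sub_ker n (A : 'I_n -> AbsGroup) (G : prodT A -> Prop)
  (F : AbsGroup) (f : prodT A -> F) (i : 'I_n) : Prop :=
  forall x, G x -> x i = gone (A i) -> f x = gone F.

(* Main.v *)
From HB Require Import structures.
Require Import Defs.
From mathcomp Require Import all_boot.
From Stdlib Require Import ClassicalEpsilon Classical FunctionalExtensionality Lia.
Set Implicit Arguments. Unset Strict Implicit. Unset Printing Implicit Defensive.

Section AG.
Variable G : AbsGroup.
Local Infix "⋅" := (@gmul G) (at level 40, left associativity).
Local Notation "1" := (@gone G).

Lemma mulKg (x y : G) : ginv x ⋅ (x ⋅ y) = y.
Proof. by rewrite gmulA gmulVl gmul1l. Qed.
Lemma mulVKg (x y : G) : x ⋅ (ginv x ⋅ y) = y.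
Proof. by rewrite gmulA gmulVr gmul1l. Qed.
Lemma mulgK (x y : G) : y ⋅ x ⋅ ginv x = y.
Proof. by rewrite -gmulA gmulVr gmul1r. Qed.
Lemma mulgVK (x y : G) : y ⋅ ginv x ⋅ x = y.
Proof. by rewrite -gmulA gmulVl gmul1r. Qed.
Lemma mulg_cancel_l (x y z : G) : x ⋅ y = x ⋅ z -> y = z.
Proof. by move=> h; rewrite -(mulKg x y) h mulKg. Qed.
Lemma mulg_cancel_r (x y z : G) : y ⋅ x = z ⋅ x -> y = z.
Proof. by move=> h; rewrite -(mulgK x y) h mulgK. Qed.
Lemma invg_uniq (x y : G) : x ⋅ y = 1 -> y = ginv x.
Proof. by move=> h; apply: (@mulg_cancel_l x); rewrite h gmulVr. Qed.
Lemma invgK (x : G) : ginv (ginv x) = x.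
Proof. by symmetry; apply: invg_uniq; rewrite gmulVl. Qed.
Lemma invMg (x y : G) : ginv (x ⋅ y) = ginv y ⋅ ginv x.
Proof. by symmetry; apply: invg_uniq; rewrite gmulA mulgK gmulVr. Qed.
Lemma invg1 : ginv (@gone G) = 1.
Proof. by symmetry; apply: invg_uniq; rewrite gmul1l. Qed.
Lemma invg_eq1 (x : G) : ginv x = 1 -> x = 1.
Proof. by move=> h; rewrite -(invgK x) h invg1. Qed.

Definition comm (x y : G) := x ⋅ y = y ⋅ x.
Definition conj (t x : G) := t ⋅ x ⋅ ginv t.

Lemma comm_sym x y : comm x y -> comm y x. Proof. by []. Qed.
Lemma comm_refl x : comm x x. Proof. by []. Qed.
Lemma comm1 x : comm x 1. Proof. by rewrite /comm gmul1l gmul1r. Qed.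
Lemma comm_inv x y : comm x y -> comm (ginv x) y.
Proof.
move=> h; rewrite /comm; apply: (@mulg_cancel_l x); rewrite mulVKg gmulA h.
by rewrite mulgK.
Qed.
Lemma comm_mul x y z : comm x y -> comm x z -> comm x (y ⋅ z).
Proof. by move=> h1 h2; rewrite /comm gmulA h1 -gmulA h2 gmulA. Qed.

Lemma conj_mul t x y : conj t (x ⋅ y) = conj t x ⋅ conj t y.
Proof. by rewrite /conj !gmulA mulgVK. Qed.
Lemma conj_inv t x : conj t (ginv x) = ginv (conj t x).
Proof. by rewrite /conj !invMg invgK gmulA. Qed.
Lemma conjK t x : conj (ginv t) (conj t x) = x.
Proof. by rewrite /conj invgK !gmulA gmulVl gmul1l mulgVK. Qed.
Lemma conjKV t x : conj t (conj (ginv t) x) = x.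
Proof. by rewrite -{1}(invgK t) conjK. Qed.
Lemma conj_comp t s x : conj t (conj s x) = conj (t ⋅ s) x.
Proof. by rewrite /conj invMg !gmulA. Qed.
Lemma conj1 t : conj t 1 = 1.
Proof. by rewrite /conj gmul1r gmulVr. Qed.
Lemma conj_eq1 t x : conj t x = 1 -> x = 1.
Proof. by move=> h; rewrite -(conjK t x) h conj1. Qed.
Lemma comm_conj t x y : comm x y -> comm (conj t x) (conj t y).
Proof. by rewrite /comm -!conj_mul => ->. Qed.
Lemma comm_conjV t x y : comm (conj t x) (conj t y) -> comm x y.
Proof. by move=> /(comm_conj (ginv t)); rewrite !conjK. Qed.
Lemma comm_conj_self x t : comm t x -> conj t x = x.
Proof. by move=> h; rewrite /conj h mulgK. Qed.
Lemma conj_self_comm x t : conj t x = x -> comm t x.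
Proof. by move=> h; rewrite /comm -{2}h /conj mulgVK. Qed.

Fixpoint gpow (g : G) n := if n is n'.+1 then g ⋅ gpow g n' else 1.
Lemma gpowD g n m : gpow g (n + m) = gpow g n ⋅ gpow g m.
Proof. by elim: n => [|n IH] /=; rewrite ?gmul1l // IH gmulA. Qed.
Lemma gpow_comm g n m : comm (gpow g n) (gpow g m).
Proof. by rewrite /comm -!gpowD addnC. Qed.

End AG.

Lemma hom1 (G H : AbsGroup) (f : G -> H) : is_hom f -> f (gone G) = gone H.
Proof.
move=> hf; apply: (@mulg_cancel_l _ (f (gone G))); rewrite -hf !gmul1r //.
Qed.
Lemma homV (G H : AbsGroup) (f : G -> H) x : is_hom f -> f (ginv x) = ginv (f x).
Proof. move=> hf; apply: invg_uniq; by rewrite -hf gmulVr hom1. Qed.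

Definition CTp (G : AbsGroup) := forall a b d : G, b <> gone G ->
  comm a b -> comm b d -> comm a d.
Definition CSAp (G : AbsGroup) := forall p h : G, p <> gone G ->
  comm p (conj h p) -> comm h p.

Lemma KL (G : AbsGroup) : CTp G -> CSAp G -> forall p q x y : G,
  p <> gone G -> q <> gone G -> comm p q -> comm (conj x p) q -> comm (conj y p) q ->
  comm x y.
Proof.
move=> ct csa p q x y p1 q1 pq xpq ypq.
have hx : comm x p by apply: csa => //; apply: (ct _ q) => //; apply: comm_sym.
have hy : comm y p by apply: csa => //; apply: (ct _ q) => //; apply: comm_sym.
by apply: (ct _ p) => //; apply: comm_sym.
Qed.

Lemma transport (F W : AbsGroup) (phi : F -> W) :
  is_hom phi -> (forall x y, phi x = phi y -> x = y) -> CTp W -> CSAp W -> CTp F /\ CSAp F.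
Proof.
move=> Hh Hi ct csa; split.
- move=> a b d b1 ab bd; apply: (Hi); rewrite !Hh; apply: (ct _ (phi b)).
  + by move=> e; apply: (b1); apply: (Hi); rewrite e hom1.
  + by rewrite /comm -!Hh ab.
  + by rewrite /comm -!Hh bd.
- move=> p h p1 hp; apply: (Hi); rewrite !Hh; apply: csa.
  + by move=> e; apply: (p1); apply: (Hi); rewrite e hom1.
  + by move: hp; rewrite /comm /conj => e; rewrite -homV // -!Hh e.
Qed.

Definition clX (X : Type) := X.
Definition ceq (X : Type) (x y : clX X) : bool :=
  if excluded_middle_informative (x = y) then true else false.
Lemma ceqP (X : Type) : Equality.axiom (@ceq X).
Proof. by move=> x y; rewrite /ceq; case: excluded_middle_informative => h; constructor. Qed.
HB.instance Definition _ (X : Type) := hasDecEq.Build (clX X) (@ceqP X).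

Section Words.
Variable X : Type.
Definition L := (clX X * bool)%type.
Definition linv (a : L) : L := (a.1, ~~ a.2).
Lemma linvK a : linv (linv a) = a. Proof. by case: a => x b; rewrite /linv /= negbK. Qed.
Lemma linv_neq a : linv a != a.
Proof. by case: a => x b; rewrite /linv /= xpair_eqE eqxx /=; case: b. Qed.
Lemma linv_inj a b : linv a = linv b -> a = b.
Proof. by move=> h; rewrite -(linvK a) h linvK. Qed.
Lemma linv_eq a b : (linv a == b) = (a == linv b).
Proof. by apply/eqP/eqP => [<-|->]; rewrite linvK. Qed.

Fixpoint reduced (s : seq L) : bool :=
  match s with
  | [::] => true
  | a :: s' => (if s' is b :: _ then b != linv a else true) && reduced s'
  end.
Definition okj (s t : seq L) : bool :=
  match t with [::] => true | b :: _ =>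
    match s with [::] => true | a :: s' => b != linv (last a s') end end.

Lemma reduced_cons a s : reduced (a :: s) = (if s is b :: _ then b != linv a else true) && reduced s.
Proof. by []. Qed.
Lemma reduced_cat s t : reduced (s ++ t) = [&& reduced s, reduced t & okj s t].
Proof.
elim: s => [|a s IH]; first by case: t => [|b t] /=; rewrite ?andbT.
case: s IH => [|c s] IH.
  by case: t {IH} => [|b t] //=; rewrite [RHS]andbC.
rewrite cat_cons reduced_cons IH /=.
by rewrite !andbA.
Qed.
Lemma reduced_behead a s : reduced (a :: s) -> reduced s.
Proof. by case/andP. Qed.
Lemma reduced_catl s t : reduced (s ++ t) -> reduced s.
Proof. by rewrite reduced_cat => /and3P[]. Qed.
Lemma reduced_catr s t : reduced (s ++ t) -> reduced t.
Proof. by rewrite reduced_cat => /and3P[]. Qed.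

Definition inv (s : seq L) := rev (map linv s).
Lemma inv_cons a s : inv (a :: s) = inv s ++ [:: linv a].
Proof. by rewrite /inv /= rev_cons cats1. Qed.
Lemma inv_cat s t : inv (s ++ t) = inv t ++ inv s.
Proof. by rewrite /inv map_cat rev_cat. Qed.
Lemma invK s : inv (inv s) = s.
Proof. by rewrite /inv map_rev revK -map_comp (eq_map linvK) map_id. Qed.
Lemma size_inv s : size (inv s) = size s.
Proof. by rewrite /inv size_rev size_map. Qed.
Lemma inv_nil : inv [::] = [::]. Proof. by []. Qed.
Lemma inv_eq_nil s : (inv s == [::]) = (s == [::]).
Proof. by case: s => [|a s] //; rewrite inv_cons; case: (inv s). Qed.
Lemma last_inv a s x : last x (inv (a :: s)) = linv a.
Proof. by rewrite inv_cons last_cat. Qed.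

Lemma okj_rcons s x b t : okj (s ++ [:: x]) (b :: t) = (b != linv x).
Proof. by case: s => [|c s] //=; rewrite last_cat. Qed.

Lemma reduced_inv s : reduced s -> reduced (inv s).
Proof.
elim: s => [|a s IH] // /andP[h1 h2]; rewrite inv_cons reduced_cat IH // andTb.
case: s h1 {IH h2} => [|b s] // h1.
by rewrite inv_cons okj_rcons linvK eq_sym.
Qed.

Definition la (a : L) (s : seq L) : seq L :=
  match s with
  | b :: s' => if b == linv a then s' else a :: s
  | [::] => [:: a]
  end.
Definition act (s t : seq L) := foldr la t s.

Lemma act_cat s s' t : act (s ++ s') t = act s (act s' t).
Proof. by rewrite /act foldr_cat. Qed.
Lemma act_cons a s t : act (a :: s) t = la a (act s t). Proof. by []. Qed.

Lemma la_red a t : reduced t -> reduced (la a t).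
Proof.
case: t => [|b t] //= /andP[h1 h2].
case: ifP => hb /=; first by case: t h1 h2 => [|c t] //= _ /andP[].
by rewrite hb h1 h2.
Qed.
Lemma act_red s t : reduced t -> reduced (act s t).
Proof. by elim: s => [|a s IH] //= h; apply: la_red; apply: IH. Qed.

Lemma la_inv a t : reduced t -> la a (la (linv a) t) = t.
Proof.
case: t => [|b t] /=; first by rewrite eqxx.
rewrite linvK; case: ifP => [/eqP ->|hb] /=.
  case: t => [|c t] //= /andP[h1 _]; by rewrite (negbTE h1).
by rewrite eqxx.
Qed.
Lemma la_inv' a t : reduced t -> la (linv a) (la a t) = t.
Proof. by move=> h; rewrite -{2}(linvK a) la_inv. Qed.

Lemma act_inv_cat s u : act s (inv s ++ u) = u.
Proof.
elim: s u => [|a s IH] u //=.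
by rewrite inv_cons -catA IH /= eqxx.
Qed.
Lemma act_inv_cat' s u : act (inv s) (s ++ u) = u.
Proof. by rewrite -{2}(invK s) act_inv_cat. Qed.
Lemma act_inv s : act s (inv s) = [::].
Proof. by have := act_inv_cat s [::]; rewrite cats0. Qed.
Lemma act_inv' s : act (inv s) s = [::].
Proof. by have := act_inv_cat' s [::]; rewrite cats0. Qed.

Lemma act_red_cat s t : reduced (s ++ t) -> act s t = s ++ t.
Proof.
elim: s => [|a s IH] //= /andP[h1 h2]; rewrite IH //.
case E: (s ++ t) h1 => [|b u] //= h1; by rewrite (negbTE h1).
Qed.
Lemma act_nil_r s : reduced s -> act s [::] = s.
Proof. by move=> h; rewrite act_red_cat ?cats0. Qed.

Lemma act_la v u a : reduced v -> reduced u -> act (la a v) u = la a (act v u).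
Proof.
move=> hv hu; case: v hv => [|b v] hv //=.
case: ifP => [/eqP ->|hb] //=.
by rewrite la_inv //; apply: act_red.
Qed.
Lemma act_assoc s t u : reduced t -> reduced u -> act (act s t) u = act s (act t u).
Proof.
elim: s => [|a s IH] //= ht hu.
by rewrite act_la ?IH //; apply: act_red.
Qed.

Definition Wt := {s : seq L | reduced s}.
Lemma Wext (x y : Wt) : sval x = sval y -> x = y.
Proof. case: x => x hx; case: y => y hy /= e; subst; by rewrite (bool_irrelevance hx hy). Qed.
Definition Wmul (x y : Wt) : Wt := exist _ (act (sval x) (sval y)) (act_red (sval x) (proj2_sig y)).
Definition Wone : Wt := exist _ [::] isT.
Definition Winv (x : Wt) : Wt := exist _ (inv (sval x)) (reduced_inv (proj2_sig x)).
Lemma WmulA x y z : Wmul x (Wmul y z) = Wmul (Wmul x y) z.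
Proof. apply: Wext => /=; by rewrite act_assoc // ?(proj2_sig y) ?(proj2_sig z). Qed.
Lemma Wmul1l x : Wmul Wone x = x. Proof. by apply: Wext. Qed.
Lemma Wmul1r x : Wmul x Wone = x. Proof. apply: Wext => /=; apply: act_nil_r; exact: (proj2_sig x). Qed.
Lemma WmulVl x : Wmul (Winv x) x = Wone. Proof. apply: Wext => /=; exact: act_inv'. Qed.
Lemma WmulVr x : Wmul x (Winv x) = Wone. Proof. apply: Wext => /=; exact: act_inv. Qed.
End Words.

Definition W (X : Type) : AbsGroup :=
  Build_AbsGroup (@WmulA X) (@Wmul1l X) (@Wmul1r X) (@WmulVl X) (@WmulVr X).

Lemma free_embed (F : AbsGroup) : is_free_group F ->
  exists (X : Type) (phi : F -> W X), is_hom phi /\ (forall x y, phi x = phi y -> x = y).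
Proof.
move=> [X [iota U]].
pose lt (a : L X) : F := if a.2 then iota a.1 else ginv (iota a.1).
pose evl (s : seq (L X)) : F := foldr (fun a g => gmul (lt a) g) (gone F) s.
have ltV a : lt (linv a) = ginv (lt a).
  by case: a => x [] //=; rewrite /lt /= invgK.
have evl_la a t : evl (la a t) = gmul (lt a) (evl t).
  case: t => [|b t] /=; first by [].
  case: ifP => [/eqP ->|_] //=.
  by rewrite ltV mulVKg.
have evl_act s t : evl (act s t) = gmul (evl s) (evl t).
  elim: s => [|a s IH] /=; first by rewrite gmul1l.
  by rewrite evl_la IH gmulA.
pose ev (x : W X) : F := evl (sval x).
have hev : is_hom ev by move=> x y; rewrite /ev /= evl_act.
pose gen (x : X) : W X := exist _ [:: ((x : clX X), true)] isT.
case: (U (W X) gen) => [[h [hh hg]] _].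
have key : forall y, (fun y => y) y = (fun y => ev (h y)) y.
  apply: ((U F iota).2 (fun y => y) (fun y => ev (h y))).
  - by move=> x y.
  - by move=> x y /=; rewrite hh hev.
  - by [].
  - by move=> x /=; rewrite hg /ev /= gmul1r.
exists X, h; split => // x y e.
by rewrite (key x) (key y) /= e.
Qed.

Ltac nlia := repeat match goal with
  | H : is_true (leq _ _) |- _ => move/leP: H => H
  | |- is_true (leq _ _) => apply/leP
  | H : is_true (_ == _) |- _ => move/eqP: H => H
  | |- is_true (_ == _) => apply/eqP
  end; unfold addn, subn, muln, addn_rec, subn_rec, muln_rec in *; lia.

Section Monoid.
Variable T : eqType.
Implicit Types x y z u : seq T.

Fixpoint mpow z n := if n is n'.+1 then z ++ mpow z n' else [::].
Lemma mpowD z n m : mpow z (n + m) = mpow z n ++ mpow z m.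
Proof. by elim: n => [|n IH] //=; rewrite IH catA. Qed.
Lemma mpow1 z : mpow z 1 = z. Proof. by rewrite /= cats0. Qed.
Lemma mpowS' z n : mpow z n.+1 = mpow z n ++ z.
Proof. by rewrite -addn1 mpowD mpow1. Qed.
Lemma mpow_comm z n : mpow z n ++ z = z ++ mpow z n.
Proof. by rewrite -mpowS'. Qed.
Lemma mpowM z n m : mpow (mpow z n) m = mpow z (n * m).
Proof. by elim: m => [|m IH] /=; rewrite ?muln0 // IH mulnS mpowD. Qed.
Lemma size_mpow z n : size (mpow z n) = n * size z.
Proof. by elim: n => [|n IH] //=; rewrite size_cat IH mulSn. Qed.
Lemma mpow_nil n : mpow [::] n = [::].
Proof. by elim: n. Qed.

Lemma catI x y z : x ++ y = x ++ z -> y = z.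
Proof. by elim: x => [|a x IH] //= [/IH]. Qed.

Lemma pref x a y b : x ++ a = y ++ b -> size x <= size y -> y = x ++ drop (size x) y.
Proof.
move=> e h; have := congr1 (take (size x)) e.
rewrite take_size_cat // takel_cat // => h1; by rewrite {1}h1 cat_take_drop.
Qed.

Lemma M1 n : forall x y, size x + size y <= n -> x ++ y = y ++ x ->
  exists z i j, x = mpow z i /\ y = mpow z j.
Proof.
elim: n => [|n IH] x y hs e.
  move: hs; rewrite leqn0 addn_eq0 !size_eq0 => /andP[/eqP -> /eqP ->].
  by exists [::], 0, 0.
case: x e hs => [|a x'] e hs; first by exists y, 0, 1; rewrite mpow1.
case: y e hs => [|b y'] e hs; first by exists (a :: x'), 1, 0; rewrite mpow1.
set x := a :: x' in e hs *; set y := b :: y' in e hs *.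
case: (leqP (size x) (size y)) => hxy.
  have ey := pref e hxy; set y2 := drop (size x) y in ey.
  have e2 : x ++ y2 = y2 ++ x.
    apply: (@catI x); by rewrite -ey catA -ey.
  have hs2 : size x + size y2 <= n.
    have := congr1 size ey; rewrite size_cat => h2.
    move: hs; rewrite h2 /x /= => hs; nlia.
  case: (IH _ _ hs2 e2) => z [i [j [h1 h2]]].
  by exists z, i, (i + j); rewrite ey mpowD -h1 -h2.
have hyx : size y <= size x by apply: ltnW.
have ex := pref (esym e) hyx; set x2 := drop (size y) x in ex.
have e2 : x2 ++ y = y ++ x2.
  apply: (@catI y); by rewrite -ex catA -ex.
have hs2 : size x2 + size y <= n.
  have := congr1 size ex; rewrite size_cat => h2.
  move: hs; rewrite h2 /y /= => hs; nlia.
case: (IH _ _ hs2 e2) => z [i [j [h1 h2]]].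
by exists z, (j + i), j; rewrite ex mpowD -h1 -h2.
Qed.

Lemma mpow_rot a b l : mpow (a ++ b) l ++ a = a ++ mpow (b ++ a) l.
Proof. by elim: l => [|l IH] /=; rewrite ?cats0 // -catA IH !catA. Qed.

Lemma M3 n : forall x y l, size x + size y <= n -> 0 < l ->
  x ++ mpow y l = mpow y l ++ x -> x ++ y = y ++ x.
Proof.
elim: n => [|n IH] x y l hs hl e.
  by move: hs; rewrite leqn0 addn_eq0 !size_eq0 => /andP[/eqP -> /eqP ->].
case: l hl e => [//|l] _ e.
case: x e hs => [|a x'] e hs; first by rewrite cats0.
case: y e hs => [|b y'] e hs; first by rewrite cats0.
set x := a :: x' in e hs *; set y := b :: y' in e hs *.
case: (leqP (size y) (size x)) => hxy.
  have e' : x ++ mpow y l.+1 = y ++ (mpow y l ++ x) by rewrite e /= catA.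
  have ex := pref (esym e') hxy; set x2 := drop (size y) x in ex.
  have e2 : x2 ++ mpow y l.+1 = mpow y l.+1 ++ x2.
    by apply: (@catI y); rewrite catA -ex e ex catA mpow_comm -catA.
  have hs2 : size x2 + size y <= n.
    have := congr1 size ex; rewrite size_cat => h2.
    move: hs; rewrite h2 /y /= => hs; nlia.
  have := IH _ _ _ hs2 (ltn0Sn l) e2 => e3.
  by rewrite ex -catA e3.
have hyx : size x <= size y by apply: ltnW.
have ey : y = x ++ drop (size x) y.
  apply: (pref (a := mpow y l.+1) (b := mpow y l ++ x)) => //.
  by rewrite e /= catA.
set y2 := drop (size x) y in ey.
have e3 : mpow (x ++ y2) l.+1 = mpow (y2 ++ x) l.+1.
  apply: (@catI x); rewrite -mpow_rot -ey; by rewrite -e.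
have e4 : x ++ y2 = y2 ++ x.
  have := congr1 (take (size (x ++ y2))) e3.
  rewrite /= take_size_cat // take_size_cat //.
  by rewrite !size_cat addnC.
by rewrite ey -catA e4.
Qed.

Lemma root_ex (c : seq T) : c != [::] -> exists rho K, [/\ rho != [::], 0 < K, c = mpow rho K &
  forall w, w ++ c = c ++ w -> exists i, w = mpow rho i].
Proof.
move=> hc.
pose Pb n := if excluded_middle_informative
   (exists z, [/\ size z = n, z != [::] & exists K, c = mpow z K]) then true else false.
have ex : exists n, Pb n.
  exists (size c); rewrite /Pb; case: excluded_middle_informative => // [[]].
  by exists c; split => //; exists 1; rewrite mpow1.
case: (ex_minnP ex) => m hm hmin.
move: hm; rewrite /Pb; case: excluded_middle_informative => // [[rho [hs hrho [K hK]]]] _.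
have minz z k : z != [::] -> c = mpow z k -> m <= size z.
  move=> hz hzk; apply: hmin; rewrite /Pb; case: excluded_middle_informative => // [[]].
  by exists z; split => //; exists k.
have K0 : 0 < K by case: K hK => [|K] // hK; move: hc; rewrite hK.
exists rho, K; split => // w hw.
case: (w =P [::]) => [->|wn]; first by exists 0.
have [u [i [j [hu hcu]]]] := M1 (leqnn _) hw.
have un : u != [::] by apply/eqP => e; apply: wn; rewrite hu e mpow_nil.
have e1 : u ++ mpow rho K = mpow rho K ++ u by rewrite -hK hcu mpow_comm.
have e2 := M3 (leqnn _) K0 e1.
have [q [al [be [hq1 hq2]]]] := M1 (leqnn _) e2.
have hcq : c = mpow q (be * K) by rewrite hK hq2 mpowM.
have qn : q != [::] by apply/eqP => e; move: hrho; rewrite hq2 e mpow_nil.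
have hle : size rho <= size q by rewrite hs; apply: minz qn hcq.
rewrite hq2 size_mpow in hle.
have sq : 0 < size q by rewrite lt0n size_eq0.
case: be hq2 hcq hle => [|[|be]] hq2 hcq hle.
- by move: hrho; rewrite hq2.
- rewrite mpow1 in hq2; exists (al * i); by rewrite hu hq1 mpowM hq2.
- exfalso; move: hle; rewrite !mulSn => hle.
  have : size q + 1 <= size q + (size q + be * size q) by rewrite leq_add2l addn_gt0 sq.
  by move=> h; have := leq_trans h hle; rewrite addn1 ltnn.
Qed.
End Monoid.

Section Crux.
Variable X : Type.
Local Notation L := (L X).
Local Notation W := (W X).
Implicit Types s t u v w r c : seq L.

Lemma valM (x y : W) : sval (gmul x y) = act (sval x) (sval y). Proof. by []. Qed.
Lemma valV (x : W) : sval (ginv x) = inv (sval x). Proof. by []. Qed.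
Lemma val1 : sval (gone W) = [::]. Proof. by []. Qed.
Lemma valR (x : W) : reduced (sval x). Proof. exact: (proj2_sig x). Qed.
Lemma Wval_inj (x y : W) : sval x = sval y -> x = y. Proof. exact: Wext. Qed.

Lemma prod_dec s t : reduced s -> reduced t -> exists s1 m t1,
  [/\ s = s1 ++ m, t = inv m ++ t1 & act s t = s1 ++ t1].
Proof.
elim: s => [|a s IH] hs ht; first by exists [::], [::], t.
have hs' := reduced_behead hs.
case: (IH hs' ht) => s1 [m [t1 [e1 e2 e3]]].
rewrite act_cons e3.
case: s1 e1 e3 => [|b s1] e1 e3.
  case: t1 e2 e3 => [|b t1] e2 e3.
    by exists [:: a], m, [::]; rewrite /= e1.
  rewrite /=; case: ifP => [/eqP hb|hb].
    exists [::], (a :: m), t1; split => //; first by rewrite e1.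
    by rewrite e2 inv_cons -catA hb.
  by exists [:: a], m, (b :: t1); rewrite e1.
have hb : b != linv a by move: hs; rewrite e1 /= => /andP[].
by exists (a :: b :: s1), m, t1; rewrite /= (negbTE hb) e1.
Qed.

Lemma okj_catr s t u : t != [::] -> okj s (t ++ u) = okj s t.
Proof. by case: t. Qed.
Lemma okj_catl u s t : s != [::] -> okj (u ++ s) t = okj s t.
Proof.
case: s => [|a s] // _; case: t => [|b t] //; case: u => [|c u] //=.
by rewrite last_cat.
Qed.

Definition cycred s := reduced s && okj s s.

Lemma reduced_mpow r n : reduced r -> okj r r -> reduced (mpow r n).
Proof.
move=> h1 h2; elim: n => [|n IH] //=; rewrite reduced_cat h1 IH /=.
case: n {IH} => [|n]; first by case: r {h1 h2}.
case: (r =P [::]) => [->|/eqP rn]; first by case: (mpow _ _).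
have -> : mpow r n.+1 = r ++ mpow r n by [].
by rewrite okj_catr.
Qed.

Lemma cycred_mpow r n : reduced r -> okj r r -> cycred (mpow r n).
Proof.
move=> h1 h2; rewrite /cycred reduced_mpow //=.
case: n => [|n] //; case: (r =P [::]) => [->|/eqP rn]; first by rewrite mpow_nil.
by rewrite {1}mpowS' /= okj_catl // okj_catr.
Qed.

Lemma inv_rcons s e : inv (rcons s e) = linv e :: inv s.
Proof. by rewrite -cats1 inv_cat /=. Qed.

Lemma cycred_inv s : cycred s -> cycred (inv s).
Proof.
case/andP => h1 h2; rewrite /cycred reduced_inv //=.
case/lastP: s h1 h2 => [|s e] //.
case: s => [|a s] h1 h2.
  by rewrite /= eq_sym linv_neq.
rewrite inv_rcons inv_cons /= last_cat /=.
move: h2; rewrite rcons_cons /= last_rcons.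
by rewrite linvK eq_sym.
Qed.

Definition InP r v := exists n, v = mpow r n \/ v = inv (mpow r n).

Lemma InP_step r K u : reduced r -> okj r r -> InP r u -> InP r (act (inv (mpow r K)) u).
Proof.
move=> h1 h2 [j [->|->]].
  case: (leqP K j) => hKj.
    exists (j - K); left.
    have hj : j = K + (j - K) by rewrite subnKC.
    by rewrite {1}hj mpowD act_inv_cat'.
  exists (K - j); right.
  have hK : K = j + (K - j) by rewrite subnKC // ltnW.
  rewrite {1}hK mpowD inv_cat act_cat act_inv' act_nil_r //.
  by apply: reduced_inv; apply: reduced_mpow.
exists (j + K); right.
rewrite act_red_cat; first by rewrite -inv_cat -mpowD.
by rewrite -inv_cat -mpowD; apply: reduced_inv; apply: reduced_mpow.
Qed.

Lemma crux c r K : cycred c -> c != [::] -> r != [::] -> c = mpow r K -> 0 < K ->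
  (forall w, w ++ c = c ++ w -> exists i, w = mpow r i) ->
  forall n (cw v : W), sval cw = c -> size (sval v) <= n -> comm cw v -> InP r (sval v).
Proof.
move=> hcyc cn rn hcK K0 hroot.
have hc := hcyc; case/andP: hc => hcr hcc.
have hr : reduced r /\ okj r r.
  case: K hcK K0 => [//|K] hcK _.
  split; first by move: hcr; rewrite hcK /= => /reduced_catl.
  move: hcc; rewrite {1}hcK {1}mpowS' hcK /= okj_catl // okj_catr //.
case: hr => hr1 hr2.
elim=> [|n IH] cw v hcw hs hcomm.
  by move: hs; rewrite leqn0 size_eq0 => /eqP ->; exists 0; left.
have hv' : reduced (sval v) := valR v.
have e0 : act c (sval v) = act (sval v) c by rewrite -hcw -!valM hcomm.
move Ev: (sval v) hs hv' e0 => v' hs hv' e0.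
have [c1 [m [v1 [ec1 ev1 ecv]]]] := prod_dec hcr hv'.
have [v2 [m' [c2 [ev2 ec2 evc]]]] := prod_dec hv' hcr.
have E : c1 ++ v1 = v2 ++ c2 by rewrite -ecv -evc.
have s1 := congr1 size ec1; have s2 := congr1 size ev1; have s3 := congr1 size ev2.
have s4 := congr1 size ec2; have s5 := congr1 size E.
rewrite !size_cat ?size_inv in s1 s2 s3 s4 s5.
have smm : size m = size m' by nlia.
case: (posnP (size m)) => hm0.
  have m0 : m = [::] by apply/eqP; rewrite -size_eq0 hm0.
  have m0' : m' = [::] by apply/eqP; rewrite -size_eq0 -smm hm0.
  rewrite m0 cats0 in ec1; rewrite m0 /= in ev1; rewrite m0' cats0 in ev2; rewrite m0' /= in ec2.
  have : v' ++ c = c ++ v' by rewrite {1}ev2 {1}ec2 -E -ec1 -ev1.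
  by case/hroot => i ->; exists i; left.
case: (ltnP (size c) (2 * size m)) => hbig.
  (* big cancellation: recurse on c v *)
  pose u := gmul cw v.
  have hu : comm cw u by apply: comm_mul => //; apply: comm_refl.
  have hsu : size (sval u) <= n.
    rewrite valM hcw Ev ecv size_cat; nlia.
  have := IH cw u hcw hsu hu => Hu.
  have ev : v = gmul (ginv cw) u by rewrite /u mulKg.
  by rewrite -Ev ev valM valV hcw hcK; apply: InP_step.
case: v2 E ev2 s3 s5 evc => [|b v2] E ev2 s3 s5 evc.
  have v10 : v1 = [::].
    apply/eqP; rewrite -size_eq0; move: s3 s5 => /= s3 s5.
    move: s2; rewrite s3 -smm add0n -{1}(addn0 (size m)) => /eqP; rewrite eqn_add2l eq_sym.
    done.
  rewrite v10 cats0 in ev1; rewrite /= in ev2.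
  pose w := ginv v.
  have hw : comm cw w by apply: comm_sym; apply: comm_inv; apply: comm_sym.
  have ew : sval w = m by rewrite valV Ev ev1 invK.
  have wn : m != [::] by rewrite -size_eq0 -lt0n.
  have hm : reduced m by move: hcr; rewrite ec1 => /reduced_catr.
  have e1 : act (sval w) c = sval w ++ c.
    apply: act_red_cat; rewrite reduced_cat hcr ew hm /=.
    by move: hcc; rewrite {1}ec1 okj_catl.
  have e2 : act c (sval w) = c ++ sval w.
    apply: act_red_cat; rewrite reduced_cat hcr ew hm /=.
    by move: hcc; rewrite {2}ec2 -ev2 ev1 invK okj_catr.
  have : sval w ++ c = c ++ sval w by rewrite -e1 -e2 -hcw -!valM hw.
  case/hroot => i hi; exists i; right; by rewrite ev1 -ew hi.
exfalso.
case: c1 ec1 E s1 s5 ecv => [|a c1] ec1 E s1 s5 ecv.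
  move: s1 s5 hbig; rewrite /= => s1 s5 hbig; nlia.
case: E => eab _.
case/lastP: m ec1 ev1 hm0 {s1 s2 smm hbig} => [//|m0 e] ec1 ev1 _.
have hb : b = linv e by move: ev1; rewrite ev2 inv_rcons /= => -[].
move: hcc; rewrite ec1 /= last_cat last_rcons eab hb.
by rewrite eqxx.
Qed.
End Crux.

Section Struct.
Variable X : Type.
Local Notation L := (L X).
Local Notation W := (W X).
Implicit Types s t u v w r c : seq L.

Definition mkW s (h : reduced s) : W := exist _ s h.

Lemma la_cons_red a s : reduced (a :: s) -> la a s = a :: s.
Proof. by move=> h; have := act_red_cat (s := [:: a]) h. Qed.

Lemma conj1g (c : W) : conj (gone W) c = c.
Proof. by rewrite /conj gmul1l invg1 gmul1r. Qed.

Lemma cycdec n : forall g : W, size (sval g) <= n ->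
  exists t c : W, cycred (sval c) /\ g = conj t c.
Proof.
elim: n => [|n IH] g hs.
  exists (gone W), g; rewrite conj1g; split => //.
  by move: hs; rewrite leqn0 size_eq0 => /eqP ->.
case hc: (cycred (sval g)); first by exists (gone W), g; rewrite conj1g.
have hr := valR g.
move: hc hr hs; case Eg: (sval g) => [|a s] //.
rewrite /cycred => /negbT; rewrite negb_and => hc hr hs.
have hok : okj (a :: s) (a :: s) = false.
  by move: hc; rewrite hr /= => /negbTE.
case/lastP: s Eg hok hr hs hc => [|s0 e] Eg hok hr hs hc.
  by move: hok; rewrite /= eq_sym linv_neq.
have he : e = linv a.
  by move: hok; rewrite /= last_rcons => /negbFE /eqP ->; rewrite linvK.
have hs0 : reduced s0.
  by move: hr; rewrite -cats1 -cat_cons => /reduced_catl /reduced_behead.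
have hsz : size s0 <= n by move: hs; rewrite /= size_rcons ltnS => /ltnW.
case: (IH (mkW hs0) hsz) => t [c [hc1 hc2]].
have ha : reduced [:: a] by [].
exists (gmul (mkW ha) t), c; split => //.
rewrite -conj_comp -hc2; apply: Wext; rewrite Eg /conj !valM valV /=.
have hr' : reduced ((a :: s0) ++ [:: linv a]) by rewrite cat_cons cats1 -he.
rewrite la_cons_red; last by move: hr' => /reduced_catl.
change (inv [:: a]) with [:: linv a].
by rewrite (act_red_cat hr') cat_cons cats1 he.
Qed.

Lemma okj_bad (y : L) (m : seq L) : okj (y :: (m ++ [:: linv y])) (y :: (m ++ [:: linv y])) = false.
Proof. by rewrite /= last_cat /= linvK eqxx. Qed.

Lemma conj_len n : forall h c : W, size (sval h) <= n -> cycred (sval c) ->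
  cycred (sval (conj h c)) -> size (sval (conj h c)) = size (sval c).
Proof.
elim: n => [|n IH] h c hs hc hq.
  have -> : h = gone W by apply: Wext; apply/eqP; rewrite -size_eq0 -leqn0.
  by rewrite conj1g.
have hr := valR h.
case/lastP Eh: (sval h) hs hr => [|h0 a] hs hr.
  have -> : h = gone W by apply: Wext.
  by rewrite conj1g.
have hr0 : reduced h0 by move: hr; rewrite -cats1 => /reduced_catl.
have ha : reduced [:: a] by [].
set H0 := mkW hr0; set A := mkW ha.
have hH : h = gmul H0 A.
  by apply: Wext; rewrite Eh valM /= act_red_cat ?cats1.
have hsz : size h0 <= n by move: hs; rewrite size_rcons ltnS.
have hcr := valR c.
case Ec: (sval c) hc hcr => [|b c'] hc hcr.
  have -> : c = gone W by apply: Wext.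
  by rewrite conj1.
have hcomp : conj h c = conj H0 (conj A c) by rewrite conj_comp hH.
case/andP: hc => hc1 hc2.
case: (eqVneq a (linv b)) => hab.
  (* rotation: first letter cancels *)
  have e1 : sval (conj A c) = c' ++ [:: b].
    rewrite /conj !valM valV Ec /= hab linvK eqxx.
    change (inv [:: linv b]) with [:: linv (linv b)]; rewrite linvK.
    apply: act_red_cat; rewrite reduced_cat (reduced_behead hc1) /=.
    by case: c' hc1 hc2 {Ec hcr} => [|x c'] //= _; rewrite eq_sym.
  have hc2' : cycred (sval (conj A c)).
    rewrite e1 /cycred; apply/andP; split.
      rewrite reduced_cat (reduced_behead hc1) /=.
      by case: c' hc1 hc2 {Ec hcr e1} => [|x c'] //= _; rewrite eq_sym.
    case: c' hc1 hc2 {Ec hcr e1} => [|x c'] /=; first by rewrite eq_sym linv_neq.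
    by case/andP=> h1 _ _; rewrite last_cat /=.
  rewrite hcomp (IH H0 (conj A c) hsz hc2'); last by rewrite -hcomp.
  by rewrite e1 size_cat addnC.
case: (eqVneq a (last b c')) => hal.
  (* rotation: last letter cancels *)
  have hbc : reduced (a :: b :: c') by rewrite reduced_cons hcr andbT eq_sym linv_eq.
  case/lastP Ed: (b :: c') hbc hal => [//|d z] hbc hal.
  have hz : z = a by rewrite hal -[last b c']/(last b (b :: c')) Ed last_rcons.
  rewrite hz in Ed hbc.
  have hd : reduced (a :: d) by move: hbc; rewrite -cats1 -cat_cons => /reduced_catl.
  have e1 : sval (conj A c) = a :: d.
    rewrite /conj !valM valV Ec (_ : sval A = [:: a]) //.
    have -> : act [:: a] (b :: c') = la a (b :: c') by [].
    have -> : inv [:: a] = [:: linv a] by [].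
    rewrite Ed la_cons_red // -cats1 -cat_cons act_cat.
    have -> : act [:: a] [:: linv a] = [::] by rewrite /= eqxx.
    by rewrite act_nil_r.
  have hc2' : cycred (sval (conj A c)).
    rewrite e1 /cycred hd /=.
    case: d Ed hbc hd {e1} => [|x d] Ed hbc hd /=; first by rewrite eq_sym linv_neq.
    move: hbc; rewrite reduced_cons => /andP[_]; rewrite -cats1 reduced_cat => /and3P[_ _].
    by rewrite /=.
  rewrite hcomp (IH H0 (conj A c) hsz hc2'); last by rewrite -hcomp.
  by rewrite e1 size_rcons.
exfalso; move: hq.
have r1 : reduced (rcons h0 a ++ b :: c').
  rewrite reduced_cat hr hcr -cats1 okj_rcons /=.
  by rewrite eq_sym linv_eq.
have r2 : reduced ((rcons h0 a ++ b :: c') ++ inv (rcons h0 a)).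
  rewrite reduced_cat r1 reduced_inv // okj_catl // inv_rcons /=.
  by apply: contra hal => /eqP /linv_inj ->.
rewrite /cycred /conj !valM valV Eh Ec (act_red_cat r1) (act_red_cat r2).
case Ehh: (rcons h0 a) => [|y ys]; first by move: Ehh; rewrite -cats1; case: (h0).
have -> : (y :: ys ++ b :: c') ++ inv (y :: ys) = y :: ((ys ++ b :: c' ++ inv ys) ++ [:: linv y]).
  by rewrite inv_cons /= -!catA /= -!catA.
by rewrite okj_bad andbF.
Qed.

Lemma pow_val r (hr : reduced r) (hok : okj r r) n : sval (gpow (mkW hr) n) = mpow r n.
Proof.
elim: n => [|n IH] //.
have -> : gpow (mkW hr) n.+1 = gmul (mkW hr) (gpow (mkW hr) n) by [].
rewrite valM IH act_red_cat //.
by have := reduced_mpow n.+1 hr hok.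
Qed.

Lemma InP_comm r (hr : reduced r) (hok : okj r r) (x y : W) :
  InP r (sval x) -> InP r (sval y) -> comm x y.
Proof.
have form (z : W) : InP r (sval z) -> exists n,
    z = gpow (mkW hr) n \/ z = ginv (gpow (mkW hr) n).
  case=> n [e|e]; exists n; [left|right]; apply: Wext; by rewrite ?valV pow_val.
move=> /form [n [->|->]] /form [m [->|->]].
- exact: gpow_comm.
- by apply: comm_sym; apply: comm_inv; apply: gpow_comm.
- by apply: comm_inv; apply: gpow_comm.
- by apply: comm_inv; apply: comm_sym; apply: comm_inv; apply: gpow_comm.
Qed.

Lemma central (c : W) : cycred (sval c) -> c <> gone W -> exists r (hr : reduced r),
  [/\ okj r r, r != [::], exists K, 0 < K /\ sval c = mpow r K &
   forall v : W, comm c v -> InP r (sval v)].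
Proof.
move=> hcyc hc1.
have cn : sval c != [::] by apply/eqP => e; apply: hc1; apply: Wext.
have [r [K [rn K0 hcK hroot]]] := root_ex cn.
have hc := hcyc; case/andP: hc => hcr hcc.
have hr : reduced r /\ okj r r.
  case: K hcK K0 => [//|K] hcK _.
  split; first by move: hcr; rewrite hcK /= => /reduced_catl.
  move: hcc; rewrite {1}hcK {1}mpowS' hcK /= okj_catl // okj_catr //.
case: hr => hr1 hr2.
exists r, hr1; split => //; first by exists K.
move=> v hv.
exact: (crux hcyc cn rn hcK K0 hroot (erefl (sval c)) (leqnn _) hv).
Qed.

Lemma torsion_free (g : W) : gmul g g = gone W -> g = gone W.
Proof.
move=> hg.
have [t [c [hc eg]]] := cycdec (leqnn (size (sval g))).
rewrite eg; move: hg; rewrite eg -conj_mul => /conj_eq1 hcc.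
have : sval (gmul c c) = [::] by rewrite hcc.
case/andP: hc => hc1 hc2.
rewrite valM act_red_cat; last by rewrite reduced_cat hc1 hc2.
move=> /eqP; rewrite -size_eq0 size_cat addn_eq0 size_eq0 andbb => /eqP e.
have -> : c = gone W by apply: Wext.
by rewrite conj1.
Qed.

Lemma CT_W : CTp W.
Proof.
move=> a b d hb ab bd.
have [t [c [hc ec]]] := cycdec (leqnn (size (sval b))).
have c1 : c <> gone W by move=> e; apply: hb; rewrite ec e conj1.
have [r [hr [hok _ _ hcent]]] := central hc c1.
have e1 : conj (ginv t) b = c by rewrite ec conjK.
have ha : comm c (conj (ginv t) a).
  by rewrite -e1; apply: comm_conj; apply: comm_sym.
have hd : comm c (conj (ginv t) d) by rewrite -e1; apply: comm_conj.
apply: (comm_conjV (t := ginv t)); apply: (InP_comm hr hok); exact: hcent.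
Qed.

Lemma CSA_c (c h : W) : cycred (sval c) -> c <> gone W -> comm c (conj h c) -> comm h c.
Proof.
move=> hc c1 hq.
have [r [hr [hok rn [K [K0 hcK]] hcent]]] := central hc c1.
have [e [qe|qe]] := hcent _ hq.
  have hcq : cycred (sval (conj h c)) by rewrite qe; apply: cycred_mpow.
  have := conj_len (leqnn _) hc hcq; rewrite qe hcK !size_mpow => /eqP.
  have sr : 0 < size r by rewrite lt0n size_eq0.
  rewrite eqn_pmul2r // => /eqP he; subst e.
  apply: conj_self_comm; apply: Wext; by rewrite qe hcK.
have hcq : cycred (sval (conj h c)) by rewrite qe; apply: cycred_inv; apply: cycred_mpow.
have := conj_len (leqnn _) hc hcq; rewrite qe size_inv hcK !size_mpow => /eqP.
have sr : 0 < size r by rewrite lt0n size_eq0.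
rewrite eqn_pmul2r // => /eqP he; subst e.
have hqc : conj h c = ginv c by apply: Wext; rewrite qe valV hcK.
have hhc : comm (gmul h h) c.
  apply: conj_self_comm; by rewrite -conj_comp hqc conj_inv hqc invgK.
case: (excluded_middle_informative (gmul h h = gone W)) => hh.
  rewrite (torsion_free hh); apply: comm_sym; exact: comm1.
apply: (CT_W hh) => //; apply: comm_mul; exact: comm_refl.
Qed.

Lemma conj_conj (G : AbsGroup) (s h x : G) : conj s (conj h x) = conj (conj s h) (conj s x).
Proof.
have -> : conj (conj s h) (conj s x) = gmul (gmul (conj s h) (conj s x)) (ginv (conj s h)) by [].
by rewrite -conj_inv -!conj_mul.
Qed.

Lemma CSA_W : CSAp W.
Proof.
move=> p h hp hq.
have [t [c [hc ec]]] := cycdec (leqnn (size (sval p))).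
have c1 : c <> gone W by move=> e; apply: hp; rewrite ec e conj1.
have e1 : conj (ginv t) p = c by rewrite ec conjK.
have := comm_conj (ginv t) hq; rewrite conj_conj e1 => hq'.
have h2 := comm_conj t (CSA_c hc c1 hq').
by rewrite conjKV -ec in h2.
Qed.
End Struct.

Theorem mainTheorem11 (n : nat) (A : 'I_n -> AbsGroup) (G : prodT A -> Prop)
  (F : AbsGroup) (f : prodT A -> F) :
  is_subgroup G -> is_free_group F -> is_hom_on G f -> nonabelian_image G f ->
  exists i : 'I_n, ker_proj_sub_ker G f i.
Proof.
move=> [G1 [GM GV]] hfree hhom [X0 [Y0 [GX0 [GY0 hXY]]]].
have [X [phi [hphi hinj]]] := free_embed hfree.
have [ct csa] := transport hphi hinj (@CT_W X) (@CSA_W X).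
apply: NNPP => hno.
have bad : forall i : 'I_n, exists b, [/\ G b, b i = gone (A i) & f b <> gone F].
  move=> i; apply: NNPP => hb; apply: hno; exists i => x Gx xi.
  apply: NNPP => fx; apply: hb; by exists x.
have pmul1 : pmul (pone A) (pone A) = pone A.
  by apply: functional_extensionality_dep => i; rewrite /pmul /pone gmul1l.
have f1 : f (pone A) = gone F.
  have := hhom _ _ G1 G1; rewrite pmul1 => e.
  apply: (@mulg_cancel_l _ (f (pone A))); by rewrite gmul1r -e.
have fV : forall u, G u -> f (pinv u) = ginv (f u).
  move=> x Gx; apply: invg_uniq; rewrite -hhom //; last exact: GV.
  have -> : pmul x (pinv x) = pone A.
    by apply: functional_extensionality_dep => i; rewrite /pmul /pinv /pone gmulVr.
  exact: f1.
pose pconj (u w : prodT A) := pmul (pmul u w) (pinv u).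
have Gconj : forall u w, G u -> G w -> G (pconj u w).
  by move=> u w Gu Gw; apply: (GM); [apply: (GM)|apply: (GV)].
have fconj : forall u w, G u -> G w -> f (pconj u w) = conj (f u) (f w).
  move=> u w Gu Gw; rewrite /pconj hhom; [|by apply: (GM)|by apply: (GV)].
  by rewrite hhom // fV.
pose pcom (u w : prodT A) := pmul (pmul (pinv u) (pinv w)) (pmul u w).
have Gcom : forall u w, G u -> G w -> G (pcom u w).
  by move=> u w Ga Gb; apply: (GM); apply: (GM) => //; apply: (GV).
have fcom : forall u w, G u -> G w -> f (pcom u w) = gone F -> comm (f u) (f w).
  move=> u w Gu Gw; rewrite /pcom hhom; [|by apply: (GM); apply: (GV)|by apply: (GM)].
  rewrite hhom; [|by apply: (GV)|by apply: (GV)].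
  rewrite hhom // !fV // => e.
  by have := invg_uniq e; rewrite invMg !invgK.
have claim : forall m, m <= n -> exists z, [/\ G z, (forall j : 'I_n, j < m -> z j = gone (A j)) &
      f z <> gone F].
  elim=> [|m IH] hm.
    exists X0; split => // e; apply: hXY; rewrite e gmul1l gmul1r //.
  have hmn : m < n by [].
  case: (IH (ltnW hmn)) => a [Ga ha fa].
  pose i := Ordinal hmn.
  case: (bad i) => b [Gb bi fb].
  have cand : forall a', G a' -> (forall j : 'I_n, j < m -> a' j = gone (A j)) ->
      ~ comm (f a') (f b) -> exists z, [/\ G z, (forall j : 'I_n, j < m.+1 -> z j = gone (A j)) &
      f z <> gone F].
    move=> a' Ga' ha' nc; exists (pcom a' b); split; first exact: Gcom.
      move=> j; rewrite ltnS leq_eqVlt => /orP[/eqP ej|hj].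
        have -> : j = i by apply: val_inj.
        by rewrite /pcom /pmul /pinv bi invg1 !gmul1r gmulVl.
      by rewrite /pcom /pmul /pinv ha' // invg1 !gmul1l gmulVl.
    by move=> e; apply: nc; apply: fcom.
  case: (classic (comm (f a) (f b))) => h1; last exact: (cand a Ga ha h1).
  case: (classic (comm (f (pconj X0 a)) (f b))) => h2; last first.
    apply: (cand _ (Gconj _ _ GX0 Ga)) => // j hj.
    by rewrite /pconj /pmul /pinv ha // gmul1r gmulVr.
  case: (classic (comm (f (pconj Y0 a)) (f b))) => h3; last first.
    apply: (cand _ (Gconj _ _ GY0 Ga)) => // j hj.
    by rewrite /pconj /pmul /pinv ha // gmul1r gmulVr.
  exfalso; apply: hXY.
  apply: (KL ct csa fa fb h1).
  - by rewrite -fconj.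
  - by rewrite -fconj.
case: (claim n (leqnn n)) => z [Gz hz fz].
apply: fz.
have -> : z = pone A by apply: functional_extensionality_dep => j; rewrite hz.
exact: f1.
Qed.
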